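(* Let $X$ be a transitive BE-algebra, $k\in(-0.5,0]$, and $(X,f)$ an $([e],[e]\vee[c_k])$-ideal of $X$. For $t\in[-1,0)$ let $Q(f;t)=\{x\in X: f(x)+t+k+1<0\}$. Then for every $t\in[-1,\tfrac{-k-1}{2})$, the set $Q(f;t)$ is either empty or an ideal of $X$.
   Context: A BE-algebra is a set $X$ with a binary operation $*$ and a distinguished element $1$ such that for all $x,y,z\in X$: $x*x=1$, $x*1=1$, $1*x=x$, and $x*(y*z)=y*(x*z)$. Write $x\le y$ iff $x*y=1$. A BE-algebra is transitive if $y*z\le(x*y)*(x*z)$ for all $x,y,z\in X$. An ideal of $X$ is a nonempty subset $I\subseteq X$ such that $x*s\in I$ for all $x\in X$, $s\in I$, and $(s*(q*x))*x\in I$ for all $x\in X$ and $s,q\in I$. An $N$-structure on $X$ is a pair $(X,f)$ where $f:X\to[-1,0]$ is any function. Fix $k\in(-1,0]$. For $x\in X$ and $t\in[-1,0)$, write $\frac{x}{t}[e]f$ if $f(x)\le t$, and $\frac{x}{t}[c_k]f$ if $f(x)+t+k+1<0$; write $\frac{x}{t}([e]\vee[c_k])f$ if at least one of these holds. The $N$-structure $(X,f)$ is an $([e],[e]\vee[c_k])$-ideal of $X$ if for all $x,y,z\in X$ and all $t,r\in[-1,0)$: (i) $f(y)\le t$ implies $\frac{x*y}{t}([e]\vee[c_k])f$; (ii) $f(x)\le t$ and $f(y)\le r$ together imply $\frac{(x*(y*z))*z}{\max\{t,r\}}([e]\vee[c_k])f$. *)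

(* Defs.v *)
From Stdlib Require Import Reals.
Open Scope R_scope.

Section BE.
Variables (X : Type) (op : X -> X -> X) (one : X).

Definition BE_algebra : Prop :=
  (forall x, op x x = one) /\
  (forall x, op x one = one) /\
  (forall x, op one x = x) /\
  (forall x y z, op x (op y z) = op y (op x z)).

Definition BE_le (x y : X) : Prop := op x y = one.

Definition BE_transitive : Prop :=
  forall x y z, BE_le (op y z) (op (op x y) (op x z)).

Definition BE_ideal (I : X -> Prop) : Prop :=
  (exists s, I s) /\
  (forall x s, I s -> I (op x s)) /\
  (forall x s q, I s -> I q -> I (op (op s (op q x)) x)).

Definition N_structure (f : X -> R) : Prop :=
  forall x, -1 <= f x <= 0.

Definition pt_e (f : X -> R) (x : X) (t : R) : Prop := f x <= t.
Definition pt_ck (f : X -> R) (k : R) (x : X) (t : R) : Prop := f x + t + k + 1 < 0.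
Definition pt_e_or_ck (f : X -> R) (k : R) (x : X) (t : R) : Prop :=
  pt_e f x t \/ pt_ck f k x t.

Definition e_eck_ideal (k : R) (f : X -> R) : Prop :=
  (forall x y t, -1 <= t < 0 -> f y <= t -> pt_e_or_ck f k (op x y) t) /\
  (forall x y z t r, -1 <= t < 0 -> -1 <= r < 0 ->
     f x <= t -> f y <= r ->
     pt_e_or_ck f k (op (op x (op y z)) z) (Rmax t r)).

Definition Qset (k : R) (f : X -> R) (t : R) : X -> Prop :=
  fun x => f x + t + k + 1 < 0.

End BE.

(* Main.v *)
Require Import Defs.
From Stdlib Require Import Reals Lra.
Open Scope R_scope.

Theorem mainTheorem11 (X : Type) (op : X -> X -> X) (one : X)
  (HBE : BE_algebra X op one) (Htr : BE_transitive X op one)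
  (k : R) (Hk : - (1/2) < k <= 0)
  (f : X -> R) (Hf : N_structure X f) (Hid : e_eck_ideal X op k f)
  (t : R) (Ht : -1 <= t < (- k - 1) / 2) :
  (forall x, ~ Qset X k f t x) \/ BE_ideal X op (Qset X k f t).
Proof.
  unfold N_structure, e_eck_ideal, pt_e_or_ck, pt_e, pt_ck in *.
  destruct Hid as [H1 H2].
  destruct (Rle_lt_dec (- t - k - 1) 0) as [Ha | Ha].
  - destruct (Classical_Prop.classic (exists s, Qset X k f t s)) as [[s Hs] | Hn].
    + right. unfold BE_ideal, Qset in *. split; [exists s; exact Hs|split].
      * intros x s0 Hs0.
        pose proof (Hf s0).
        destruct (H1 x s0 (Rmax (f s0) t)) as [E|E].
        -- split; [apply Rmax_case_strong; lra | apply Rmax_case_strong; lra].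
        -- apply Rmax_l.
        -- revert E; apply Rmax_case_strong; intros; lra.
        -- revert E; apply Rmax_case_strong; intros; lra.
      * intros x s0 q Hs0 Hq.
        pose proof (Hf s0). pose proof (Hf q).
        destruct (H2 s0 q x (Rmax (f s0) t) (Rmax (f q) t)) as [E|E].
        -- split; [apply Rmax_case_strong; lra | apply Rmax_case_strong; lra].
        -- split; [apply Rmax_case_strong; lra | apply Rmax_case_strong; lra].
        -- apply Rmax_l.
        -- apply Rmax_l.
        -- revert E; repeat apply Rmax_case_strong; intros; lra.
        -- revert E; repeat apply Rmax_case_strong; intros; lra.
    + left. intros x Hx. apply Hn. exists x. exact Hx.
  - right. unfold BE_ideal, Qset. split; [exists one; pose proof (Hf one); lra|split].
    + intros x s _. pose proof (Hf (op x s)); lra.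
    + intros x s q _ _. pose proof (Hf (op (op s (op q x)) x)); lra.
Qed.
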